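(* Let $(\Omega,\mathcal F,\mu)$ be a $\sigma$-finite measure space, $\mathcal P_>$ the set of $\mu$-a.s. strictly positive probability densities, and for $p\in\mathcal P_>$ let $H_p=L^2_0(p)=\{u: E_p[u^2]<\infty,\ E_p[u]=0\}$ with inner product $(u,v)\mapsto E_p[uv]$. For $p,q\in\mathcal P_>$ and $u\in H_p$ define $$U_p^q u=\sqrt{\tfrac pq}\,u-\Bigl(1+E_q\Bigl[\sqrt{\tfrac pq}\Bigr]\Bigr)^{-1}\Bigl(1+\sqrt{\tfrac pq}\Bigr)E_q\Bigl[\sqrt{\tfrac pq}\,u\Bigr].$$ Then: (1) $U_p^q$ is an isometry of $H_p$ onto $H_q$; (2) $U_q^p\circ U_p^q u=u$ for all $u\in H_p$, and the adjoint of $U_p^q$ (with respect to the inner products of $H_p$ and $H_q$) is $U_q^p$.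
   Context: $E_p[\cdot]$ denotes expectation with respect to the probability measure $p\cdot\mu$. *)

(* Defs.v *)
From HB Require Import structures.
From mathcomp Require Import all_boot all_order all_algebra.
From mathcomp Require Import all_classical all_reals all_analysis.
Set Implicit Arguments. Unset Strict Implicit. Unset Printing Implicit Defensive.
Import Order.TTheory GRing.Theory Num.Theory.
Local Open Scope classical_set_scope.
Local Open Scope ring_scope.

Section Defs.
Context (d : measure_display) (T : measurableType d) (R : realType)
  (mu : {measure set T -> \bar R}).

Definition Ep (p f : T -> R) : \bar R := (\int[mu]_x (f x * p x)%:E)%E.

Definition pos_density (p : T -> R) : Prop :=
  [/\ measurable_fun setT p,
      (\int[mu]_x (p x)%:E = 1)%E &
      {ae mu, forall x, 0 < p x}].

Definition inH (p u : T -> R) : Prop :=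
  [/\ measurable_fun setT u,
      (Ep p (fun x => (u x ^+ 2)%R) < +oo)%E &
      Ep p u = 0%E].

Definition ip (p u v : T -> R) : \bar R := Ep p (fun x => u x * v x).

Definition sqr (p q : T -> R) : T -> R := fun x => Num.sqrt (p x / q x).

Definition Uop (p q u : T -> R) : T -> R := fun x =>
  sqr p q x * u x
  - (1 + fine (Ep q (sqr p q)))^-1 * (1 + sqr p q x)
    * fine (Ep q (fun y => sqr p q y * u y)).
End Defs.

(* Main.v *)
Require Import Defs.
From HB Require Import structures.
From mathcomp Require Import all_boot all_order all_algebra.
From mathcomp Require Import all_classical all_reals all_analysis.
From mathcomp Require Import measurable_realfun.
From mathcomp Require Import ring lra.
Import Order.TTheory GRing.Theory Num.Theory.
Local Open Scope classical_set_scope.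
Local Open Scope ring_scope.

Module Helpers.
Set Implicit Arguments. Unset Strict Implicit. Unset Printing Implicit Defensive.


Section Gen.
Context (R : realType).

Lemma measurable_invR : measurable_fun [set: R] (@GRing.inv R).
Proof.
rewrite -(setvU [set 0%R]).
have m0 : measurable [set (0:R)] by [].
have := measurable_funU (@GRing.inv R) (measurableC m0) m0.
move=> [_ H]; apply: H.
split; last exact: measurable_fun_set1.
apply: open_continuous_measurable_fun.
  by apply: closed_openC; apply: accessible_closed_set1; apply: hausdorff_accessible; exact: Rhausdorff.
move=> x; rewrite inE /= => x0; apply: inv_continuous; exact/eqP.
Qed.

Lemma measurable_sqrtR : measurable_fun [set: R] (@Num.sqrt R).
Proof. apply: continuous_measurable_fun; exact: sqrt_continuous. Qed.

Lemma sqrt_div (P Q : R) : 0 < P -> 0 < Q ->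
  Num.sqrt (P / Q) = Num.sqrt P / Num.sqrt Q.
Proof. by move=> hP hQ; rewrite sqrtrM ?ltW // sqrtrV ?ltW. Qed.

End Gen.

Section Gen2.
Context (d : measure_display) (T : measurableType d) (R : realType)
  (mu : {measure set T -> \bar R}).

Definition Int (f : T -> R) := mu.-integrable setT (EFin \o f).
Notation RI f := (Rintegral mu setT f).

Lemma RI_ae (f g : T -> R) : measurable_fun setT f -> measurable_fun setT g ->
  {ae mu, forall x, f x = g x} -> RI f = RI g.
Proof.
move=> mf mg h; rewrite /Rintegral; congr fine.
apply: ae_eq_integral => //; [exact/measurable_EFinP..|].
by apply: filterS h => x /= ->.
Qed.

Lemma mabs (f : T -> R) : measurable_fun setT f ->
  measurable_fun setT (fun x => `|(f x)%:E|%E).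
Proof.
move=> mf.
have h1 : measurable_fun setT (EFin \o f) by exact/measurable_EFinP.
exact: (measurableT_comp _ h1).
Qed.

Lemma Int_meas f : Int f -> measurable_fun setT f.
Proof. by move=> /integrableP[/measurable_EFinP]. Qed.

Lemma Int_le (f g : T -> R) : measurable_fun setT f -> Int g ->
  {ae mu, forall x, `|f x| <= `|g x|} -> Int f.
Proof.
move=> mf ig h; apply/integrableP; split; first exact/measurable_EFinP.
case/integrableP: ig => mg lg; apply: le_lt_trans lg.
apply: ae_ge0_le_integral => //.
- exact: mabs.
- by apply: mabs; apply/measurable_EFinP.
by apply: filterS h => x hx _ /=; rewrite lee_fin.
Qed.



Lemma Ep_fin (q f : T -> R) : Int (fun x => f x * q x) ->
  Ep mu q f = (RI (fun x => f x * q x))%:E.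
Proof. by move=> h; rewrite /Rintegral fineK //; exact: integrable_fin_num. Qed.

Lemma IntD f g : Int f -> Int g -> Int (fun x => f x + g x).
Proof. by move=> hf hg; apply: eq_integrable (integrableD _ hf hg) => //. Qed.

Lemma IntZ k f : Int f -> Int (fun x => k * f x).
Proof. by move=> hf; apply: eq_integrable (integrableZl _ k hf) => //. Qed.

Lemma IntB f g : Int f -> Int g -> Int (fun x => f x - g x).
Proof. by move=> hf hg; apply: eq_integrable (integrableB _ hf hg) => //. Qed.

Lemma Int_abs f : Int f -> Int (fun x => `|f x|).
Proof. by move=> hf; exact: integrable_norm. Qed.

Lemma RID f g : Int f -> Int g -> RI (fun x => f x + g x) = RI f + RI g.
Proof. by move=> hf hg; rewrite RintegralD. Qed.
Lemma RIB f g : Int f -> Int g -> RI (fun x => f x - g x) = RI f - RI g.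
Proof. by move=> hf hg; rewrite RintegralB. Qed.
Lemma RIZ k f : Int f -> RI (fun x => k * f x) = k * RI f.
Proof. by move=> hf; rewrite RintegralZl. Qed.

End Gen2.



Section Gen3.
Context (d : measure_display) (T : measurableType d) (R : realType)
  (mu : {measure set T -> \bar R}).
Local Notation RI f := (Rintegral mu setT f).
Local Notation Int := (Int mu).

Lemma Int_ae (f h : T -> R) : measurable_fun setT f -> Int h ->
  {ae mu, forall x, f x = h x} -> Int f /\ RI f = RI h.
Proof.
move=> mf ih e; split.
  by apply: Int_le mf ih _; apply: filterS e => x ->.
exact: RI_ae mf (Int_meas ih) e.
Qed.

Lemma Int_nonneg (f : T -> R) : measurable_fun setT f -> {ae mu, forall x, 0 <= f x} ->
  (\int[mu]_x (f x)%:E < +oo)%E -> Int f.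
Proof.
move=> mf f0 fi; apply/integrableP; split; first exact/measurable_EFinP.
rewrite (_ : \int[mu]_x _ = \int[mu]_x (f x)%:E)%E //.
apply: ae_eq_integral => //; first exact: mabs.
  exact/measurable_EFinP.
by apply: filterS f0 => x hx _ /=; rewrite ger0_norm.
Qed.

Lemma norm_le_ge0 (X Y : R) : -Y <= X -> X <= Y -> `|X| <= `|Y|.
Proof.
move=> h1 h2; have Y0 : 0 <= Y by lra.
by rewrite (ger0_norm Y0) ler_norml h1 h2.
Qed.

Lemma dens_meas r : pos_density mu r -> measurable_fun setT r.
Proof. by case. Qed.

Lemma Int_dens r : pos_density mu r -> Int r.
Proof.
case=> mr r1 r0; apply: Int_nonneg => //.
  by apply: filterS r0 => x /ltW.
by rewrite r1 ltry.
Qed.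

Lemma RI_dens r : pos_density mu r -> RI r = 1.
Proof. by case=> _ r1 _; rewrite /Rintegral r1. Qed.

Section H.
Variables (r u : T -> R) (hr : pos_density mu r) (hu : inH mu r u).

Lemma inH_meas : measurable_fun setT u.
Proof. by case: hu. Qed.

Lemma Int_u2 : Int (fun x => u x ^+ 2 * r x).
Proof.
case: hu => mu' u2 _; case: hr => mr _ r0; apply: Int_nonneg => //.
- by apply: measurable_funM => //; exact: measurable_funX.
- by apply: filterS r0 => x hx; rewrite mulr_ge0 // ?sqr_ge0 // ltW.
Qed.

Lemma Int_ur : Int (fun x => u x * r x).
Proof.
have i2 := Int_u2.
apply: (Int_le _ (IntD i2 (Int_dens hr))).
  by apply: measurable_funM => //; [exact: inH_meas | exact: dens_meas].
case: hr => _ _; apply: filterS => x hx.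
have := mulr_ge0 (ltW hx) (sqr_ge0 (u x - 1)); have := mulr_ge0 (ltW hx) (sqr_ge0 (u x + 1)).
by move=> h1 h2; apply: norm_le_ge0; nra.
Qed.

Lemma RI_ur : RI (fun x => u x * r x) = 0.
Proof.
case: hu => _ _ e; move: e; rewrite (Ep_fin Int_ur).
by move=> [].
Qed.

End H.
End Gen3.



Section G4.
Context (d : measure_display) (T : measurableType d) (R : realType)
  (mu : {measure set T -> \bar R}).
Local Notation RI f := (Rintegral mu setT f).
Local Notation Int := (Int mu).

Definition Gf (p q : T -> R) x := Num.sqrt (p x) * Num.sqrt (q x).
Definition kk (p q : T -> R) := (1 + fine (Ep mu q (sqr p q)))^-1.
Definition cc (p q u : T -> R) := fine (Ep mu q (fun y => sqr p q y * u y)).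

Lemma UopE p q u x : Uop mu p q u x = sqr p q x * u x - kk p q * (1 + sqr p q x) * cc p q u.
Proof. by []. Qed.

Lemma Gsym p q : Gf q p = Gf p q.
Proof. by apply/funext => x; rewrite /Gf mulrC. Qed.

Lemma G_ge0 p q x : 0 <= Gf p q x.
Proof. by rewrite /Gf mulr_ge0 ?sqrtr_ge0. Qed.

Lemma msqrt (f : T -> R) : measurable_fun setT f -> measurable_fun setT (fun x => Num.sqrt (f x)).
Proof. by move=> mf; exact: measurableT_comp (@measurable_sqrtR R) mf. Qed.

Lemma msqr (p q : T -> R) : measurable_fun setT p -> measurable_fun setT q ->
  measurable_fun setT (sqr p q).
Proof.
move=> mp mq; apply: msqrt; apply: measurable_funM => //.
exact: measurableT_comp (@measurable_invR R) mq.
Qed.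

Lemma mG (p q : T -> R) : measurable_fun setT p -> measurable_fun setT q ->
  measurable_fun setT (Gf p q).
Proof. by move=> mp mq; apply: measurable_funM; apply: msqrt. Qed.

Section PQ1.
Variables (p q : T -> R) (hp : pos_density mu p) (hq : pos_density mu q).

Let mp := dens_meas hp.
Let mq := dens_meas hq.

Lemma aepq : {ae mu, forall x, 0 < p x /\ 0 < q x}.
Proof.
case: hp => _ _ h1; case: hq => _ _ h2.
by apply: (filterS2 _ _ h1 h2) => x a b.
Qed.

Lemma keyex x : 0 < p x -> 0 < q x -> exists a b,
  [/\ 0 < a, 0 < b, p x = a ^+ 2, q x = b ^+ 2 &
   [/\ sqr p q x = a / b, sqr q p x = b / a & Gf p q x = a * b]].
Proof.
move=> px qx; exists (Num.sqrt (p x)), (Num.sqrt (q x)).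
split; rewrite ?sqrtr_gt0 ?sqr_sqrtr ?ltW //.
by split; rewrite // /sqr sqrt_div.
Qed.

Lemma Int_G : Int (Gf p q).
Proof.
apply: (Int_le (mG mp mq) (IntD (Int_dens hp) (Int_dens hq))).
apply: filterS aepq => x [px qx].
have [a [b [a0 b0 -> -> [_ _ ->]]]] := keyex px qx.
by apply: norm_le_ge0; nra.
Qed.

Lemma A_G : fine (Ep mu q (sqr p q)) = RI (Gf p q).
Proof.
apply: RI_ae; first exact: measurable_funM (msqr mp mq) mq.
  exact: mG.
apply: filterS aepq => x [px qx].
have [a [b [a0 b0 _ -> [-> _ ->]]]] := keyex px qx.
by field; rewrite gt_eqF.
Qed.

Lemma A_ge0 : 0 <= fine (Ep mu q (sqr p q)).
Proof. by rewrite A_G; apply: Rintegral_ge0 => // x _; exact: G_ge0. Qed.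

Section U.
Variable u : T -> R.
Hypothesis hu : inH mu p u.
Let mu' := inH_meas hu.

Lemma Int_uG : Int (fun x => u x * Gf p q x).
Proof.
apply: (Int_le _ (IntD (Int_u2 hp hu) (Int_dens hq))).
  by apply: measurable_funM => //; exact: mG.
apply: filterS aepq => x [px qx].
have [a [b [a0 b0 e1 e2 [_ _ ->]]]] := keyex px qx.
rewrite e1 e2.
have := sqr_ge0 (u x * a - b); have := sqr_ge0 (u x * a + b).
by move=> h1 h2; apply: norm_le_ge0; nra.
Qed.

Lemma c_G : cc p q u = RI (fun x => u x * Gf p q x).
Proof.
apply: RI_ae.
- by apply: measurable_funM => //; apply: measurable_funM => //; exact: msqr.
- by apply: measurable_funM => //; exact: mG.
apply: filterS aepq => x [px qx].
have [a [b [a0 b0 _ -> [-> _ ->]]]] := keyex px qx.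
by field; rewrite gt_eqF.
Qed.

Lemma Int_uvG v : inH mu q v -> Int (fun x => u x * v x * Gf p q x).
Proof.
move=> hv; apply: (Int_le _ (IntD (Int_u2 hp hu) (Int_u2 hq hv))).
  apply: measurable_funM => //; last exact: mG.
  by apply: measurable_funM => //; exact: inH_meas hv.
apply: filterS aepq => x [px qx].
have [a [b [a0 b0 e1 e2 [_ _ ->]]]] := keyex px qx.
rewrite e1 e2.
have := sqr_ge0 (u x * a - v x * b); have := sqr_ge0 (u x * a + v x * b).
by move=> h1 h2; apply: norm_le_ge0; nra.
Qed.

End U.
End PQ1.
End G4.



Section G5.
Context (d : measure_display) (T : measurableType d) (R : realType)
  (mu : {measure set T -> \bar R}).
Local Notation RI f := (Rintegral mu setT f).
Local Notation Int := (Int mu).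

Ltac mt := repeat (first [ assumption | exact: measurable_cst
   | apply: measurable_funM | apply: measurable_funB | apply: measurable_funD
   | apply: msqr | apply: mG ]).

Lemma Ep_ae (q f h : T -> R) : measurable_fun setT (fun x => f x * q x) -> Int h ->
  {ae mu, forall x, f x * q x = h x} -> Ep mu q f = (RI h)%:E.
Proof.
move=> mf ih e; have [i e'] := Int_ae mf ih e.
by rewrite (Ep_fin i) e'.
Qed.

Lemma mU_gen (p q u : T -> R) : measurable_fun setT p -> measurable_fun setT q ->
  measurable_fun setT u -> measurable_fun setT (Uop mu p q u).
Proof.
move=> mp mq mu'; rewrite /Uop; apply: measurable_funB.
  by apply: measurable_funM => //; exact: msqr.
apply: measurable_funM => //; apply: measurable_funM => //.
by apply: measurable_funD => //; exact: msqr.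
Qed.

Section PQ2.
Variables (p q : T -> R) (hp : pos_density mu p) (hq : pos_density mu q).
Let mp := dens_meas hp.
Let mq := dens_meas hq.

Lemma A_pos : 1 + fine (Ep mu q (sqr p q)) != 0.
Proof. have := A_ge0 hp hq; by move=> h; rewrite gt_eqF //; lra. Qed.

Lemma kk_sym : kk mu q p = kk mu p q.
Proof. by rewrite /kk (A_G hp hq) (A_G hq hp) Gsym. Qed.

Lemma mU u : measurable_fun setT u -> measurable_fun setT (Uop mu p q u).
Proof. exact: mU_gen. Qed.

Section U.
Variable u : T -> R.
Hypothesis hu : inH mu p u.
Let mu' := inH_meas hu.

Lemma U_mean : Ep mu q (Uop mu p q u) = 0%E.
Proof.
rewrite (@Ep_ae q _ (fun x => u x * Gf p q x
    - kk mu p q * cc mu p q u * (q x + Gf p q x))).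
- rewrite RIB; [|exact: Int_uG|].
  + rewrite RIZ; last exact: IntD (Int_dens hq) (Int_G hp hq).
    rewrite RID; [|exact: Int_dens hq|exact: Int_G hp hq].
    rewrite -(c_G hp hq hu) (RI_dens hq) -(A_G hp hq) /kk.
    by congr EFin; field; exact: A_pos.
  + apply: IntZ; apply: IntD; [exact: Int_dens hq|exact: Int_G hp hq].
- by apply: measurable_funM => //; exact: mU.
- apply: IntB; first exact: Int_uG.
  apply: IntZ; apply: IntD; [exact: Int_dens hq|exact: Int_G hp hq].
apply: filterS (aepq hp hq) => x [px qx].
have [a [b [a0 b0 e1 e2 [e3 e4 e5]]]] := keyex px qx.
by rewrite UopE e2 e3 e5; field; rewrite gt_eqF.
Qed.

Lemma U_sq : Ep mu q (fun x => Uop mu p q u x ^+ 2) =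
  (RI (fun x => u x ^+ 2 * p x))%:E.
Proof.
have iG := Int_G hp hq.
have iuG := Int_uG hp hq hu.
have iup := Int_ur hp hu.
have iu2 := Int_u2 hp hu.
have ip' := Int_dens hp.
have iq := Int_dens hq.
rewrite (@Ep_ae q _ (fun x => (u x ^+ 2 * p x
    - (2 * kk mu p q * cc mu p q u) * (u x * Gf p q x + u x * p x))
    + (kk mu p q * cc mu p q u) ^+ 2 * (q x + (2 * Gf p q x + p x)))).
- rewrite RID; last 2 first.
  + by apply: IntB => //; apply: IntZ; apply: IntD.
  + by apply: IntZ; apply: IntD => //; apply: IntD => //; apply: IntZ.
  rewrite RIB //; last by apply: IntZ; apply: IntD.
  rewrite RIZ; last by apply: IntD.
  rewrite RIZ; last by apply: IntD => //; apply: IntD => //; apply: IntZ.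
  rewrite (RID iuG iup).
  have i2G : Int (fun x => 2 * Gf p q x) by apply: IntZ.
  rewrite (RID iq (IntD i2G ip')) (RID i2G ip') (RIZ _ iG).
  rewrite -(c_G hp hq hu) (RI_dens hq) (RI_dens hp) (RI_ur hp hu) -(A_G hp hq) /kk.
  by congr EFin; field; exact: A_pos.
- apply: measurable_funM => //; apply: measurable_funX; exact: mU.
- apply: IntD.
  + by apply: IntB => //; apply: IntZ; apply: IntD.
  + by apply: IntZ; apply: IntD => //; apply: IntD => //; apply: IntZ.
apply: filterS (aepq hp hq) => x [px qx].
have [a [b [a0 b0 e1 e2 [e3 e4 e5]]]] := keyex px qx.
by rewrite UopE e1 e2 e3 e5; field; rewrite gt_eqF.
Qed.

Lemma U_inH : inH mu q (Uop mu p q u).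
Proof.
split; [exact: mU| |exact: U_mean].
by rewrite U_sq ltry.
Qed.

Lemma U_iso : ip mu q (Uop mu p q u) (Uop mu p q u) = ip mu p u u.
Proof.
rewrite /ip.
rewrite (_ : (fun x => Uop mu p q u x * Uop mu p q u x) =
  (fun x => Uop mu p q u x ^+ 2)); last by apply/funext => x; rewrite expr2.
rewrite (_ : (fun x => u x * u x) = (fun x => u x ^+ 2)); last by apply/funext => x; rewrite expr2.
by rewrite U_sq (Ep_fin (Int_u2 hp hu)).
Qed.

Lemma c2 : cc mu q p (Uop mu p q u) = - cc mu p q u.
Proof.
have iG := Int_G hp hq.
have iup := Int_ur hp hu.
have ip' := Int_dens hp.
rewrite {1}/cc (@Ep_ae p _ (fun x => u x * p x
    - kk mu p q * cc mu p q u * (Gf p q x + p x))) /=.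
- rewrite RIB //; last by apply: IntZ; apply: IntD.
  rewrite RIZ; last by apply: IntD.
  rewrite RID // (RI_dens hp) (RI_ur hp hu) -(A_G hp hq) /kk.
  by field; exact: A_pos.
- apply: measurable_funM => //; apply: measurable_funM; first exact: msqr.
  exact: mU.
- by apply: IntB => //; apply: IntZ; apply: IntD.
apply: filterS (aepq hp hq) => x [px qx].
have [a [b [a0 b0 e1 e2 [e3 e4 e5]]]] := keyex px qx.
by rewrite UopE e1 e3 e4 e5; field; apply/andP; split; rewrite gt_eqF.
Qed.

Lemma U_inv : {ae mu, forall x, Uop mu q p (Uop mu p q u) x = u x}.
Proof.
apply: filterS (aepq hp hq) => x [px qx].
rewrite UopE c2 kk_sym UopE.
have [a [b [a0 b0 e1 e2 [e3 e4 e5]]]] := keyex px qx.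
by rewrite e3 e4; field; apply/andP; split; rewrite gt_eqF.
Qed.

Section V.
Variable v : T -> R.
Hypothesis hv : inH mu q v.
Let mv := inH_meas hv.

Lemma Int_vG : Int (fun x => v x * Gf p q x).
Proof. by have := Int_uG hq hp hv; rewrite Gsym. Qed.

Lemma c_vG : cc mu q p v = RI (fun x => v x * Gf p q x).
Proof. by rewrite (c_G hq hp hv) Gsym. Qed.

Lemma U_adj : ip mu q (Uop mu p q u) v = ip mu p u (Uop mu q p v).
Proof.
have iuvG := Int_uvG hp hq hu hv.
have iuG := Int_uG hp hq hu.
have ivG := Int_vG.
have ivq := Int_ur hq hv.
have iup := Int_ur hp hu.
rewrite /ip (@Ep_ae q _ (fun x => u x * v x * Gf p q x
    - kk mu p q * cc mu p q u * (v x * q x + v x * Gf p q x))); first last.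
- apply: filterS (aepq hp hq) => x [px qx].
  have [a [b [a0 b0 e1 e2 [e3 e4 e5]]]] := keyex px qx.
  by rewrite UopE e2 e3 e5; field; rewrite gt_eqF.
- by apply: IntB => //; apply: IntZ; apply: IntD.
- apply: measurable_funM => //; apply: measurable_funM => //; exact: mU.
rewrite (@Ep_ae p _ (fun x => u x * v x * Gf p q x
    - kk mu q p * cc mu q p v * (u x * p x + u x * Gf p q x))); first last.
- apply: filterS (aepq hp hq) => x [px qx].
  have [a [b [a0 b0 e1 e2 [e3 e4 e5]]]] := keyex px qx.
  by rewrite UopE e1 e4 e5; field; rewrite gt_eqF.
- by apply: IntB => //; apply: IntZ; apply: IntD.
- apply: measurable_funM => //; apply: measurable_funM => //.
  by apply: mU_gen.
rewrite RIB //; last by apply: IntZ; apply: IntD.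
rewrite RIZ; last by apply: IntD.
rewrite RID //.
rewrite RIB //; last by apply: IntZ; apply: IntD.
rewrite RIZ; last by apply: IntD.
rewrite RID //.
rewrite (RI_ur hq hv) (RI_ur hp hu) kk_sym c_vG -(c_G hp hq hu).
by congr EFin; ring.
Qed.

End V.

End U.
End PQ2.
End G5.


End Helpers.
Import Helpers.

Theorem proposition13 (d : measure_display) (T : measurableType d)
  (R : realType) (mu : {measure set T -> \bar R})
  (smu : sigma_finite setT mu) (p q : T -> R)
  (hp : pos_density mu p) (hq : pos_density mu q) :
  (* (1) U_p^q maps H_p into H_q, isometrically, and onto H_q *)
  ((forall u, inH mu p u -> inH mu q (Uop mu p q u)) /\
   (forall u, inH mu p u ->
      ip mu q (Uop mu p q u) (Uop mu p q u) = ip mu p u u) /\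
   (forall w, inH mu q w ->
      exists2 u, inH mu p u & {ae mu, forall x, Uop mu p q u x = w x})) /\
  (* (2) U_q^p is a left inverse of U_p^q and its adjoint *)
  ((forall u, inH mu p u ->
      {ae mu, forall x, Uop mu q p (Uop mu p q u) x = u x}) /\
   (forall u v, inH mu p u -> inH mu q v ->
      ip mu q (Uop mu p q u) v = ip mu p u (Uop mu q p v))).
Proof.
split; [split; [|split]|split].
- by move=> u hu; exact (U_inH hp hq hu).
- by move=> u hu; exact (U_iso hp hq hu).
- move=> w hw; exists (Uop mu q p w); first exact (U_inH hq hp hw).
  exact (U_inv hq hp hw).
- by move=> u hu; exact (U_inv hp hq hu).
- by move=> u v hu hv; exact (U_adj hp hq hu hv).
Qed.
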